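(* Let $X$ be a connected $k$-regular graph and $U$ the transition matrix of the Grover walk on $X$. Let $\lambda$ be an eigenvalue of $A(X)$ with $\lambda\neq\pm k$, let $E_\lambda$ be the orthogonal projection onto the $\lambda$-eigenspace of $A(X)$, and write $\lambda=k\cos\theta$ with $\theta\in(0,\pi)$. Then $e^{i\theta}$ and $e^{-i\theta}$ are eigenvalues of $U$, and if $F_{\theta_+}$ and $F_{\theta_-}$ denote the orthogonal projections onto the $e^{i\theta}$- and $e^{-i\theta}$-eigenspaces of $U$ respectively, then $F_{\theta_+}-F_{\theta_-}$ is a purely imaginary scalar multiple of \[D_t^TE_\lambda D_h - D_h^TE_\lambda D_t.\]
   Context: Each edge $\{a,b\}$ of $X$ is replaced by arcs $(a,b)$ and $(b,a)$. The line digraph $\mathrm{LD}(X)$ has the arcs as vertices, with an arc from $(a,b)$ to $(c,d)$ iff $b=c$; $A(\mathrm{LD}(X))$ is its $01$-adjacency matrix. $R$ is the permutation matrix on arcs mapping $(a,b)$ to $(b,a)$. The transition matrix of the Grover walk is $U=\frac{2}{k}A(\mathrm{LD}(X))-R$ (a real orthogonal matrix). $D_t$ and $D_h$ have rows indexed by vertices and columns by arcs: $(D_t)_{u,(a,b)}=1$ iff $u=a$, $(D_h)_{u,(a,b)}=1$ iff $u=b$, and $0$ otherwise. *)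

(* Defs.v *)
From HB Require Import structures.
From mathcomp Require Import all_boot all_algebra.
From mathcomp Require Import reals trigo.
From mathcomp Require Export complex.
Set Implicit Arguments. Unset Strict Implicit. Unset Printing Implicit Defensive.
Import GRing.Theory Num.Theory.
Local Open Scope ring_scope.
Local Open Scope complex_scope.

Section Graph.
Variables (V : finType) (e : rel V).

Definition simple_graph := symmetric e /\ irreflexive e.
Definition regular (k : nat) := forall v : V, #|[set w | e v w]| = k.
Definition connected_graph := forall x y : V, connect e x y.

Definition garc := {p : V * V | e p.1 p.2}.
Definition tl (x : garc) : V := (val x).1.
Definition hd (x : garc) : V := (val x).2.

Variable R : realType.
Notation C := (R[i]).

(* vertices indexed by 'I_#|V|, arcs by 'I_#|garc| via enum_val *)
Definition adjmx : 'M[C]_#|V| :=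
  \matrix_(i, j) (e (enum_val i) (enum_val j))%:R.
Definition LDadj : 'M[C]_#|{: garc}| :=
  \matrix_(i, j) (hd (enum_val i) == tl (enum_val j))%:R.
Definition revmx : 'M[C]_#|{: garc}| :=
  \matrix_(i, j) ((tl (enum_val i) == hd (enum_val j)) &&
                  (hd (enum_val i) == tl (enum_val j)))%:R.
Definition grover (k : nat) : 'M[C]_#|{: garc}| :=
  (2%:R / k%:R) *: LDadj - revmx.
Definition Dt : 'M[C]_(#|V|, #|{: garc}|) :=
  \matrix_(u, x) (enum_val u == tl (enum_val x))%:R.
Definition Dh : 'M[C]_(#|V|, #|{: garc}|) :=
  \matrix_(u, x) (enum_val u == hd (enum_val x))%:R.
End Graph.

Definition adjoint (R : realType) n (P : 'M[R[i]]_n) : 'M[R[i]]_n :=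
  (map_mx conjc P)^T.

Definition orth_proj_eigenspace (R : realType) n (M P : 'M[R[i]]_n) (mu : R[i]) :=
  [/\ P *m P = P, adjoint P = P &
      forall v : 'cV[R[i]]_n, P *m v = v <-> M *m v = mu *: v].

(* Main.v *)
Require Import Defs.
From HB Require Import structures.
From mathcomp Require Import all_boot all_algebra.
From mathcomp Require Import reals trigo.
From mathcomp Require Import complex.
From mathcomp Require Import ring lra.
Import GRing.Theory Num.Theory.
Local Open Scope ring_scope.
Local Open Scope complex_scope.
Set Implicit Arguments. Unset Strict Implicit.

Lemma eq_enum (T : finType) (u : 'I_#|T|) (v : T) :
  (enum_val u == v) = (u == enum_rank v).
Proof. by apply/eqP/eqP => [<-|->]; [rewrite enum_valK | rewrite enum_rankK]. Qed.

Lemma sum_pick (F0 : nmodType) (I : finType) (r : I) (F : I -> F0) :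
  \sum_y (F y *+ (y == r)) = F r.
Proof.
rewrite (bigD1 r) //= eqxx mulr1n big1 ?addr0 // => y /negbTE ->.
by rewrite mulr0n.
Qed.

Section Adj.
Variable R : realType.
Local Notation C := R[i].

Definition adjr m n (M : 'M[C]_(m, n)) : 'M[C]_(n, m) := (map_mx conjc M)^T.

Lemma adjrM m n p (M : 'M[C]_(m, n)) (N : 'M[C]_(n, p)) :
  adjr (M *m N) = adjr N *m adjr M.
Proof. by rewrite /adjr map_mxM trmx_mul. Qed.

Lemma adjrD m n (M N : 'M[C]_(m, n)) : adjr (M + N) = adjr M + adjr N.
Proof. by rewrite /adjr map_mxD linearD. Qed.

Lemma adjrB m n (M N : 'M[C]_(m, n)) : adjr (M - N) = adjr M - adjr N.
Proof. by rewrite /adjr map_mxB linearB. Qed.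

Lemma adjrZ m n (s : C) (M : 'M[C]_(m, n)) : adjr (s *: M) = conjc s *: adjr M.
Proof. by rewrite /adjr map_mxZ linearZ. Qed.

Lemma adjr_tr m n (M : 'M[C]_(m, n)) : adjr M^T = (adjr M)^T.
Proof. by rewrite /adjr -map_trmx. Qed.

Lemma adjr_nat m n (f : 'I_m -> 'I_n -> nat) :
  adjr (\matrix_(i, j) ((f i j)%:R : C)) = (\matrix_(i, j) ((f i j)%:R : C))^T.
Proof. by apply/matrixP => i j; rewrite !mxE conjc_nat. Qed.

Lemma col_mulmx m n p (M : 'M[C]_(m, n)) (N : 'M[C]_(n, p)) j :
  col j (M *m N) = M *m col j N.
Proof.
apply/matrixP => i l; rewrite !mxE; apply: eq_bigr => l' _; by rewrite !mxE.
Qed.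

Lemma mx_by_cols m n p (M : 'M[C]_(m, n)) (N : 'M[C]_(n, p)) (N' : 'M[C]_(m, p)) :
  (forall j, M *m col j N = col j N') -> M *m N = N'.
Proof.
move=> h; apply/matrixP => i j; have /matrixP/(_ i 0) := h j.
by rewrite -col_mulmx !mxE.
Qed.

Lemma proj_unique n (P Q : 'M[C]_n) :
  P *m P = P -> Q *m Q = Q -> adjr P = P -> adjr Q = Q ->
  (forall v : 'cV_n, P *m v = v <-> Q *m v = v) -> P = Q.
Proof.
move=> PP QQ aP aQ h.
have QP : Q *m P = P.
  apply: mx_by_cols => j; apply/h; by rewrite -col_mulmx PP.
have PQ : P *m Q = Q.
  apply: mx_by_cols => j; apply/h; by rewrite -col_mulmx QQ.
by rewrite -aP -QP adjrM aP aQ PQ.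
Qed.

End Adj.
Section Comb.
Variables (V : finType) (e : rel V) (R : realType) (k : nat).
Hypotheses (hsym : symmetric e) (hreg : regular e k).
Local Notation C := R[i].
Local Notation A := (adjmx e R).
Local Notation T := (Dt e R).
Local Notation H := (Dh e R).
Local Notation Rv := (revmx e R).

Lemma sum_arcs (F : V -> V -> C) :
  \sum_(x < #|{: garc e}|) F (tl (enum_val x)) (hd (enum_val x)) =
  \sum_a \sum_b F a b *+ e a b.
Proof.
rewrite -(big_enum_val (fun x : garc e => F (tl x) (hd x))) /=.
rewrite pair_big /=.
rewrite [RHS](eq_bigr (fun p : V * V => if e p.1 p.2 then F p.1 p.2 else 0)); last by move=> p _; rewrite mulrb.
rewrite -big_mkcond /=.
rewrite (reindex_omap (val : garc e -> V * V) insub); last first.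
  by move=> p ep; rewrite insubT.
apply: eq_bigl => -[p ep] /=; rewrite insubT ep /=.
by rewrite inE eqxx.
Qed.

Lemma sum_tl (v : V) (G : V -> V -> C) :
  \sum_a \sum_b (G a b *+ (v == a)) *+ e a b = \sum_b G v b *+ e v b.
Proof.
rewrite (bigD1 v) //= [X in _ + X]big1 ?addr0.
  by apply: eq_bigr => b _; rewrite eqxx mulr1n.
move=> a av; rewrite eq_sym (negbTE av); apply: big1 => b _; by rewrite mulr0n mul0rn.
Qed.

Lemma sum_deg v : \sum_b (1 : C) *+ e v b = k%:R.
Proof.
rewrite -(hreg v) -sum1_card natr_sum [RHS]big_mkcond /=.
by apply: eq_bigr => b _; rewrite inE; case: (e v b).
Qed.

Lemma natb_swap (b1 b2 : bool) : (b1%:R : C) *+ b2 = (b2%:R : C) *+ b1.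
Proof. by case: b1; case: b2. Qed.

Lemma TTt : T *m T^T = (k%:R : C)%:M.
Proof.
apply/matrixP => u w; rewrite !mxE.
under eq_bigr do rewrite !mxE.
rewrite (sum_arcs (fun a b => (enum_val u == a)%:R * (enum_val w == a)%:R)).
under eq_bigr do under eq_bigr do rewrite mulr_natl.
rewrite sum_tl.
have [->|nuw] := eqVneq u w.
  by rewrite eqxx sum_deg.
have -> : (enum_val w == enum_val u) = false.
  by apply/negbTE; apply: contra nuw => /eqP /enum_val_inj ->.
by rewrite mulr0n; apply: big1 => b _; rewrite mul0rn.
Qed.

Lemma THt : T *m H^T = A.
Proof.
apply/matrixP => u w; rewrite !mxE.
under eq_bigr do rewrite !mxE.
rewrite (sum_arcs (fun a b => (enum_val u == a)%:R * (enum_val w == b)%:R)).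
under eq_bigr do under eq_bigr do rewrite mulr_natl.
rewrite sum_tl.
under eq_bigr => b _ do rewrite natb_swap eq_sym.
by rewrite (sum_pick (enum_val w) (fun b => (1 : C) *+ e (enum_val u) b)).
Qed.

Lemma At : A^T = A.
Proof. by apply/matrixP => u w; rewrite !mxE hsym. Qed.

Lemma HTt : H *m T^T = A.
Proof. by rewrite -[H]trmxK -trmx_mul THt At. Qed.

Lemma rev_proof (x : garc e) : e (val x).2 (val x).1.
Proof. by rewrite hsym (valP x). Qed.

Definition grev (x : garc e) : garc e :=
  exist (fun p : V * V => e p.1 p.2) ((val x).2, (val x).1) (rev_proof x).

Lemma grevK : involutive grev.
Proof. by move=> [[a b] p]; apply: val_inj. Qed.

Lemma tl_rev x : tl (grev x) = hd x. Proof. by []. Qed.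
Lemma hd_rev x : hd (grev x) = tl x. Proof. by []. Qed.

Lemma Rentry x y : Rv x y = (y == enum_rank (grev (enum_val x)))%:R.
Proof.
rewrite mxE -eq_enum; congr (_%:R).
case: (enum_val x) => [[a b] pab]; case: (enum_val y) => [[c d] pcd].
rewrite /tl /hd /= -val_eqE /= xpair_eqE.
by rewrite (eq_sym a) (eq_sym b) andbC.
Qed.

Lemma Rmul p (M : 'M[C]_(#|{: garc e}|, p)) :
  Rv *m M = \matrix_(x, j) M (enum_rank (grev (enum_val x))) j.
Proof.
apply/matrixP => x j; rewrite !mxE.
under eq_bigr do rewrite Rentry mulr_natl.
by rewrite (sum_pick _ (fun y => M y j)).
Qed.

Lemma RHt : Rv *m H^T = T^T.
Proof. by rewrite Rmul; apply/matrixP => x u; rewrite !mxE enum_rankK. Qed.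

Lemma RTt : Rv *m T^T = H^T.
Proof. by rewrite Rmul; apply/matrixP => x u; rewrite !mxE enum_rankK. Qed.

Lemma RR : Rv *m Rv = 1%:M.
Proof.
rewrite Rmul; apply/matrixP => x z; rewrite mxE Rentry enum_rankK grevK.
by rewrite enum_valK [RHS]mxE eq_sym.
Qed.

Lemma Rt : Rv^T = Rv.
Proof.
apply/matrixP => x y; rewrite mxE !Rentry; congr (_%:R); congr (nat_of_bool _).
rewrite -!eq_enum; apply/idP/idP => /eqP E; apply/eqP; by rewrite E grevK.
Qed.

Lemma TR : T *m Rv = H.
Proof. by rewrite -[T]trmxK -Rt -trmx_mul RTt trmxK. Qed.

Lemma HR : H *m Rv = T.
Proof. by rewrite -[H]trmxK -Rt -trmx_mul RHt trmxK. Qed.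

Lemma HHt : H *m H^T = (k%:R : C)%:M.
Proof. by rewrite -TR trmx_mul Rt mulmxA -(mulmxA T) RR mulmx1 TTt. Qed.

Lemma LDE : LDadj e R = H^T *m T.
Proof.
apply/matrixP => x z; rewrite !mxE.
under eq_bigr do rewrite !mxE mulr_natl !eq_enum.
by rewrite (sum_pick _ (fun u => ((u == enum_rank (tl (enum_val z)))%:R : C))) (inj_eq enum_rank_inj).
Qed.


Local Notation U := (grover e R k).
Local Notation c := (2%:R / (k%:R : C)).

Section Alg.
Variables (lamC nu : C).
Hypotheses (hk : (k%:R : C) != 0) (hnu : nu != 0) (hnu2 : nu * nu != 1)
  (hlam : lamC = k%:R / 2%:R * (nu + nu^-1)).

Local Notation X := (H^T - nu^-1 *: T^T).
Local Notation Y := (H - nu *: T).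
Local Notation d := (2%:R * k%:R - (nu + nu^-1) * lamC).

Lemma two_neq0 : (2%:R : C) != 0.
Proof. by rewrite pnatr_eq0. Qed.

Lemma ck : c * k%:R = 2%:R.
Proof. by rewrite mulfVK. Qed.

Lemma Udef : U = c *: (H^T *m T) - Rv.
Proof. by rewrite /grover LDE. Qed.

Lemma UTt : U *m T^T = H^T.
Proof.
rewrite Udef mulmxBl -scalemxAl -mulmxA TTt mul_mx_scalar scalerA ck RTt.
by rewrite scaler_nat mulr2n addrK.
Qed.

Lemma UHt : U *m H^T = c *: (H^T *m A) - T^T.
Proof. by rewrite Udef mulmxBl -scalemxAl -mulmxA THt RHt. Qed.

Lemma TU : T *m U = c *: (A *m T) - H.
Proof. by rewrite Udef mulmxBr -scalemxAr mulmxA THt TR. Qed.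

Lemma HU : H *m U = T.
Proof.
rewrite Udef mulmxBr -scalemxAr mulmxA HHt mul_scalar_mx scalerA ck HR.
by rewrite scaler_nat mulr2n addrK.
Qed.

Lemma d_neq0 : d != 0.
Proof.
have -> : d = - (k%:R / 2%:R) * ((nu * nu - 1) / nu) ^+ 2.
  by rewrite hlam; field.
apply: mulf_neq0; first by rewrite oppr_eq0 mulf_neq0 // invr_neq0 // two_neq0.
apply: expf_neq0; apply: mulf_neq0; last by rewrite invr_neq0.
by rewrite subr_eq0.
Qed.

Lemma YX : Y *m X = (2%:R * k%:R : C)%:M - (nu + nu^-1) *: A.
Proof.
rewrite !mulmxBr !mulmxBl -!scalemxAl -!scalemxAr HHt HTt THt TTt scalerA.
apply/matrixP => i j; rewrite !mxE.
by field; rewrite ?hnu ?hk.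
Qed.

Lemma eig_U : eigenvalue A lamC -> eigenvalue U nu.
Proof.
case/eigenvalueP => v hv v0; apply/eigenvalueP; exists (v *m Y).
  rewrite -mulmxA mulmxBl -scalemxAl HU TU.
  move: (Dt e R) (Dh e R) => T0 H0.
  rewrite !mulmxBr -!scalemxAr (mulmxBr v) -scalemxAr mulmxA hv -scalemxAl.
  move: (v *m T0) (v *m H0) => a b.
  apply/matrixP => i j; rewrite !mxE hlam.
  by field; rewrite ?hnu ?hk.
apply: contraNneq v0 => h.
have : v *m Y *m X = d *: v.
  rewrite -mulmxA YX mulmxBr -scalemxAr hv mul_mx_scalar scalerA -scalerBl.
  by congr (_ *: _); ring.
rewrite h mul0mx => /esym/eqP; rewrite scaler_eq0 => /orP[|/eqP //].
by rewrite (negbTE d_neq0).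
Qed.





Lemma aH : adjr H = H^T.
Proof. by rewrite /Dh (@adjr_nat R _ _ (fun u x => nat_of_bool _)). Qed.

Lemma aT : adjr T = T^T.
Proof. by rewrite /Dt (@adjr_nat R _ _ (fun u x => nat_of_bool _)). Qed.

Lemma aA : adjr A = A.
Proof. by rewrite /adjmx (@adjr_nat R _ _ (fun u x => nat_of_bool _)); apply/matrixP => i j; rewrite !mxE hsym. Qed.

Section Proj.
Variable E : 'M[C]_#|V|.
Hypotheses (hE : orth_proj_eigenspace A E lamC) (hlamR : lamC^* = lamC)
  (hconj : nu^* = nu^-1).

Lemma EE : E *m E = E. Proof. by case: hE. Qed.
Lemma aE : adjr E = E. Proof. by case: hE. Qed.
Lemma Efix (v : 'cV[C]_#|V|) : E *m v = v <-> A *m v = lamC *: v. Proof. by case: hE. Qed.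

Lemma AE : A *m E = lamC *: E.
Proof.
apply: mx_by_cols => j.
have /Efix -> : E *m col j E = col j E by rewrite -col_mulmx EE.
by apply/matrixP => i l; rewrite !mxE.
Qed.

Lemma EA : E *m A = lamC *: E.
Proof. rewrite -{1}aE -aA -adjrM AE adjrZ aE; congr (_ *: _); exact: hlamR. Qed.

Lemma EYXE : E *m (Y *m (X *m E)) = d *: E.
Proof.
rewrite (mulmxA Y) YX mulmxA mulmxBr mul_mx_scalar -scalemxAr EA mulmxBl -!scalemxAl EE.
by rewrite scalerA -scalerBl.
Qed.

Lemma XEYXE : X *m E *m Y *m X *m E = d *: (X *m E).
Proof. by rewrite -!mulmxA EYXE -scalemxAr. Qed.

Definition Pm := d^-1 *: (X *m E *m Y).

Lemma PXE : Pm *m (X *m E) = X *m E.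
Proof.
by rewrite /Pm -scalemxAl !mulmxA XEYXE scalerA mulVf ?d_neq0 // scale1r.
Qed.

Lemma PP : Pm *m Pm = Pm.
Proof.
rewrite /Pm -scalemxAl -scalemxAr !mulmxA XEYXE -!scalemxAl !scalerA.
by rewrite mulVf ?d_neq0 // mulr1.
Qed.

Lemma aX : adjr X = Y.
Proof.
rewrite adjrB adjrZ adjr_tr aH adjr_tr aT !trmxK; congr (_ - _ *: _).
by rewrite fmorphV -[RHS]invrK; congr (_^-1); exact: hconj.
Qed.

Lemma aY : adjr Y = X.
Proof. by rewrite adjrB adjrZ aH aT; congr (_ - _ *: _); exact: hconj. Qed.

Lemma aDinv : (d^-1)^* = d^-1.
Proof.
rewrite fmorphV rmorphB !rmorphM !rmorph_nat rmorphD fmorphV.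
have -> : complex_conjc__canonical__GRing_RMorphism R nu = nu^-1 := hconj.
have -> : complex_conjc__canonical__GRing_RMorphism R lamC = lamC := hlamR.
by rewrite invrK (addrC nu^-1).
Qed.

Lemma Padj : adjr Pm = Pm.
Proof. by rewrite /Pm adjrZ !adjrM aE aX aY aDinv mulmxA. Qed.

Lemma UXE : U *m (X *m E) = nu *: (X *m E).
Proof.
rewrite mulmxA (mulmxBr U) -scalemxAr UHt UTt.
rewrite !mulmxBl -!scalemxAl -mulmxA AE -scalemxAr.
move: (H^T *m E) (T^T *m E) => a b.
apply/matrixP => i j; rewrite !mxE hlam.
by field; rewrite ?hnu ?hk.
Qed.

Lemma UP : U *m Pm = nu *: Pm.
Proof.
rewrite /Pm -scalemxAr !mulmxA -(mulmxA U) UXE -scalemxAl.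
by rewrite !scalerA mulrC.
Qed.

Lemma fix_iff (w : 'cV[C]_#|{: garc e}|) : Pm *m w = w <-> U *m w = nu *: w.
Proof.
split=> [hw|hw].
  by rewrite -hw mulmxA UP -scalemxAl.
have ha : T *m w = nu *: (H *m w) by rewrite -HU -mulmxA hw -scalemxAr.
have hb : nu *: (T *m w) = c *: (A *m (T *m w)) - H *m w.
  by rewrite scalemxAr -hw (mulmxA T) TU mulmxBl -scalemxAl -mulmxA.
move: (H *m w) ha hb => b ha hb.
have Ab : A *m b = lamC *: b.
  move: hb; rewrite ha -scalemxAr; move: (A *m b) => z hb'.
  apply/matrixP => i j; move/matrixP/(_ i j): hb'; rewrite !mxE => hb'.
  have -> : z i j = (c * (nu * z i j) - b i j + b i j) / (c * nu).
    by field; rewrite ?hnu ?hk.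
  by rewrite -hb' hlam; field; rewrite ?hnu ?hk.
have Eb : E *m b = b by apply/Efix.
have hRw : Rv *m w = c *: (H^T *m (T *m w)) - nu *: w.
  rewrite -hw Udef mulmxBl -scalemxAl -mulmxA.
  by rewrite opprB addrC subrK.
have hw2 : w = c *: (T^T *m (T *m w)) - nu *: (c *: (H^T *m (T *m w)) - nu *: w).
  rewrite -{1}[w]mul1mx -RR -mulmxA hRw mulmxBr -!scalemxAr (mulmxA Rv) RHt.
  by rewrite hRw.
rewrite ha -!scalemxAr in hw2.
have hw3 : w = (- c * nu * nu / (1 - nu * nu)) *: (X *m b).
  rewrite mulmxBl -scalemxAl; move: hw2.
  move: (T^T *m b) (H^T *m b) => t h hw2.
  apply/matrixP => i j; move/matrixP/(_ i j): hw2; rewrite !mxE => hw2.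
  have h1 : 1 - nu * nu != 0 by rewrite subr_eq0 eq_sym.
  have -> : w i j = (w i j - nu * nu * w i j) / (1 - nu * nu).
    by field; rewrite ?h1.
  rewrite {1}hw2.
  by field; rewrite ?hnu ?hk ?h1.
rewrite hw3 -scalemxAr -Eb (mulmxA X E b) (mulmxA Pm) PXE.
by [].
Qed.

Lemma main_proj (F : 'M[C]_#|{: garc e}|) :
  orth_proj_eigenspace U F nu -> F = Pm.
Proof.
case=> FF Fadj Ffix; apply: proj_unique => //; first exact: PP; first exact: Padj.
by move=> v; rewrite Ffix fix_iff.
Qed.

End Proj.
End Alg.
End Comb.

Lemma diff_id (R : realType) (p q : nat) (a b : R[i]) (Ht Tt : 'M[R[i]]_(p, q)) (E : 'M[R[i]]_q)
  (H T : 'M[R[i]]_(q, p)) :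
  (Ht - b *: Tt) *m E *m (H - a *: T) - (Ht - a *: Tt) *m E *m (H - b *: T) =
  (a - b) *: (Tt *m E *m H - Ht *m E *m T).
Proof.
rewrite !mulmxBl !mulmxBr -!scalemxAl -!scalemxAr !scalerA.
move: (Ht *m E *m H) (Ht *m E *m T) (Tt *m E *m H) (Tt *m E *m T) => m1 m2 m3 m4.
apply/matrixP => i j; rewrite !mxE; ring.
Qed.

Unset Implicit Arguments.

Theorem corollary5p2 (R : realType) (V : finType) (e : rel V) (k : nat)
  (hsimple : simple_graph e) (hconn : connected_graph e) (hreg : regular e k)
  (lam theta : R)
  (hlam : eigenvalue (adjmx e R) lam%:C)
  (hlamk : lam != k%:R) (hlamnk : lam != - k%:R)
  (htheta : 0 < theta < pi) (hcos : lam = k%:R * cos theta) :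
  eigenvalue (grover e R k) (cos theta +i* sin theta) /\
  eigenvalue (grover e R k) (cos theta +i* (- sin theta)) /\
  forall (E : 'M[R[i]]_#|V|) (Fp Fm : 'M[R[i]]_#|{: @garc V e}|),
    orth_proj_eigenspace (adjmx e R) E lam%:C ->
    orth_proj_eigenspace (grover e R k) Fp (cos theta +i* sin theta) ->
    orth_proj_eigenspace (grover e R k) Fm (cos theta +i* (- sin theta)) ->
    exists c : R,
      Fp - Fm = (c%:C * 'i) *:
        ((Dt e R)^T *m E *m Dh e R - (Dh e R)^T *m E *m Dt e R).
Proof.
case: hsimple => hsym _.
set nu := cos theta +i* sin theta.
set nu' := cos theta +i* (- sin theta).
have hs : 0 < sin theta := sin_gt0_pi htheta.
have hcs : cos theta ^+ 2 + sin theta ^+ 2 = 1 := cos2Dsin2 theta.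
have hnn : nu * nu' = 1.
  apply/eqP; rewrite eq_complex /=; apply/andP; split; apply/eqP.
    by rewrite -hcs; ring.
  by ring.
have nu0 : nu != 0.
  by apply/eqP => h; move: hnn; rewrite h mul0r => /eqP; rewrite eq_sym oner_eq0.
have nu'0 : nu' != 0.
  by apply/eqP => h; move: hnn; rewrite h mulr0 => /eqP; rewrite eq_sym oner_eq0.
have hinv : nu^-1 = nu' by rewrite -[nu^-1]mulr1 -hnn mulKf.
have hinv' : nu'^-1 = nu by rewrite -hinv invrK.
have nuneq : nu != nu'.
  apply/eqP => -[h].
  by move: hs; rewrite h; lra.
have hnu2 : nu * nu != 1.
  apply: contra_neq nuneq => h.
  by rewrite -hinv -[nu^-1]mul1r -h mulfK.
have hnu2' : nu' * nu' != 1.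
  apply: contra_neq nuneq => h.
  by rewrite -hinv' -[nu'^-1]mul1r -h mulfK.
have hk0 : k != 0%N.
  by apply: contraNneq hlamk => k0; rewrite hcos k0 mul0r.
have hk : (k%:R : R[i]) != 0 by rewrite pnatr_eq0.
have hsum : nu + nu' = (2 * cos theta)%:C.
  apply/eqP; rewrite eq_complex /=; apply/andP; split; apply/eqP; ring.
have hlamC : lam%:C = k%:R / 2 * (nu + nu^-1).
  rewrite hinv hsum hcos !rmorphM !rmorph_nat.
  by field.
have hlamC' : lam%:C = k%:R / 2 * (nu' + nu'^-1).
  by rewrite hinv' addrC -hinv.
have hlamR : (lam%:C)^* = lam%:C by exact: conjc_real.
have hconj : nu^* = nu^-1 by rewrite hinv.
have hconj' : nu'^* = nu'^-1 by rewrite hinv' /conjc /= opprK.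
split; first exact: (eig_U hsym hreg hk nu0 hnu2 hlamC hlam).
split; first exact: (eig_U hsym hreg hk nu'0 hnu2' hlamC' hlam).
move=> E Fp Fm hE hFp hFm.
rewrite (main_proj hsym hreg hk nu0 hnu2 hlamC hE hlamR hconj hFp).
rewrite (main_proj hsym hreg hk nu'0 hnu2' hlamC' hE hlamR hconj' hFm).
exists ((k%:R * sin theta)^-1).
rewrite /Pm hinv hinv' (addrC nu' nu) -scalerBr diff_id scalerA.
congr (_ *: _).
have hdiff : nu - nu' = (2 * sin theta)%:C * 'i.
  by apply/eqP; rewrite eq_complex /=; apply/andP; split; apply/eqP; ring.
rewrite hsum hdiff hcos.
have hd : 2 * k%:R - (2 * cos theta)%:C * (k%:R * cos theta)%:C =
    (2 * k%:R - 2 * cos theta * (k%:R * cos theta))%:C.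
  by rewrite rmorphB !rmorphM !rmorph_nat.
have sn0 : sin theta != 0 by apply: lt0r_neq0.
have kR : (k%:R : R) != 0 by rewrite pnatr_eq0.
have hc2 : cos theta ^+ 2 = 1 - sin theta ^+ 2 by rewrite -hcs addrK.
have hr : (2 * k%:R - 2 * cos theta * (k%:R * cos theta))^-1 * (2 * sin theta) =
    (k%:R * sin theta)^-1.
  have -> : 2 * k%:R - 2 * cos theta * (k%:R * cos theta) = 2 * k%:R * sin theta ^+ 2.
    transitivity (2 * k%:R * (1 - cos theta ^+ 2)); first by ring.
    by rewrite hc2; ring.
  by field; rewrite ?sn0 ?kR.
have key : ((2 * k%:R - 2 * cos theta * (k%:R * cos theta))^-1)%:C *
    (2 * sin theta)%:C = ((k%:R * sin theta)^-1)%:C.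
  by rewrite -rmorphM hr.
by rewrite hd -fmorphV (mulrA _ (2 * sin theta)%:C) key.
Qed.
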